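(* Let $W$ be the function on pairs of integers defined as in the context. Let $k \ge 1$ be an integer. Then for all integers $n, m$ with $n \ge m \ge 1$ and $m \le k$, $$W(n,m)\ \ge\ \frac{\sqrt{2k-2}}{k}\cdot\frac{m}{\sqrt{n+m}}.$$
   Context: $W:\mathbb{Z}\times\mathbb{Z}\to[0,1]$ is defined recursively (by induction on $n+m$) as follows: - $W(n,m)=0$ if $m\le 0$; - $W(n,m)=1$ if $m\ge 1$ and $n<m$; - for $n\ge m\ge 1$, $W(n,m)=\frac{n}{n+m}W(n-2,m)+\frac{m}{n+m}W(n-1,m-1)$. $W(n,m)$ is the probability that the mafia wins the mafia game without detectives, started with $n$ civilians and $m$ mafia members, when both sides play uniformly at random. *)

(* Defs.v *)
From Stdlib Require Import Reals ZArith Lia Lra.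
Open Scope R_scope.

(* Recursive calls decrease n+m by 2, so fuel Z.to_nat (n+m) always suffices:
   whenever n >= m >= 1 we have n+m >= 2 > 0 and children have n+m-2 <= fuel-1. *)
Fixpoint W_fuel (f : nat) (n m : Z) : R :=
  if (m <=? 0)%Z then 0
  else if (n <? m)%Z then 1
  else match f with
       | O => 0 (* unreachable when f >= n+m *)
       | S f' => (IZR n / IZR (n + m)) * W_fuel f' (n - 2)%Z m
                 + (IZR m / IZR (n + m)) * W_fuel f' (n - 1)%Z (m - 1)%Z
       end.

Definition W (n m : Z) : R := W_fuel (Z.to_nat (n + m)) n m.

(* Main.v *)
Require Import Defs.
From Stdlib Require Import Reals ZArith Lia Lra Psatz.
Open Scope R_scope.

Lemma fuel_indep : forall f g n m, (Z.to_nat (n+m) <= f)%nat -> (Z.to_nat (n+m) <= g)%nat ->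
  W_fuel f n m = W_fuel g n m.
Proof.
  induction f as [|f IH]; intros g n m Hf Hg.
  - destruct g; simpl; auto.
    destruct (m <=? 0)%Z eqn:E1; auto. destruct (n <? m)%Z eqn:E2; auto.
    apply Z.leb_gt in E1. apply Z.ltb_ge in E2. lia.
  - destruct g as [|g].
    + simpl. destruct (m <=? 0)%Z eqn:E1; auto. destruct (n <? m)%Z eqn:E2; auto.
      apply Z.leb_gt in E1. apply Z.ltb_ge in E2. lia.
    + simpl. destruct (m <=? 0)%Z eqn:E1; auto. destruct (n <? m)%Z eqn:E2; auto.
      apply Z.leb_gt in E1. apply Z.ltb_ge in E2.
      rewrite (IH g (n-2)%Z m) by lia. rewrite (IH g (n-1)%Z (m-1)%Z) by lia. reflexivity.
Qed.

Lemma W_neg : forall n m, (m <= 0)%Z -> W n m = 0.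
Proof. intros n m H. unfold W. destruct (Z.to_nat (n+m)); simpl;
  replace ((m <=? 0)%Z) with true by (symmetry; apply Z.leb_le; lia); auto. Qed.

Lemma W_lt : forall n m, (1 <= m)%Z -> (n < m)%Z -> W n m = 1.
Proof. intros n m H1 H2. unfold W. destruct (Z.to_nat (n+m)); simpl;
  replace ((m <=? 0)%Z) with false by (symmetry; apply Z.leb_gt; lia);
  replace ((n <? m)%Z) with true by (symmetry; apply Z.ltb_lt; lia); auto. Qed.

Lemma W_rec : forall n m, (1 <= m)%Z -> (m <= n)%Z ->
  W n m = IZR n / IZR (n+m) * W (n-2) m + IZR m / IZR (n+m) * W (n-1) (m-1).
Proof.
  intros n m H1 H2. unfold W at 1.
  replace (Z.to_nat (n+m)) with (S (Z.to_nat (n+m-1))) by lia. simpl.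
  replace ((m <=? 0)%Z) with false by (symmetry; apply Z.leb_gt; lia);
  replace ((n <? m)%Z) with false by (symmetry; apply Z.ltb_ge; lia).
  unfold W. rewrite (fuel_indep _ (Z.to_nat (n-2+m)) (n-2)%Z m) by lia.
  rewrite (fuel_indep _ (Z.to_nat (n-1+(m-1))) (n-1)%Z (m-1)%Z) by lia. reflexivity.
Qed.

Lemma sq_le : forall x y, 0 <= y -> 0 <= x -> x*x <= y*y -> x <= y.
Proof. intros x y Hy Hx H. destruct (Rle_lt_dec x y); auto. nra. Qed.

Lemma base (k n m : Z) : (1 <= m)%Z -> (m <= k)%Z -> (m - 2 <= n)%Z -> (n < m)%Z ->
  sqrt (IZR (2 * k - 2)) / IZR k * (IZR m / sqrt (IZR (n + m))) <= 1.
Proof.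
  intros H1 H2 H3 H4.
  destruct (Z.eq_dec (n+m) 0) as [E|E].
  { rewrite E, sqrt_0. unfold Rdiv at 2. rewrite Rinv_0. lra. }
  assert (Hs : (1 <= n + m)%Z) by lia.
  assert (Hz : ((2*k-2)*(m*m) <= k*k*(n+m))%Z).
  { destruct (Z.eq_dec m 1) as [->|Hm1].
    - nia.
    - assert (0 <= (k-m)*((k-1)*(m-1)-1))%Z by (apply Z.mul_nonneg_nonneg; nia).
      assert (k*k*(2*m-2) <= k*k*(n+m))%Z by (apply Z.mul_le_mono_nonneg_l; nia).
      nia. }
  apply IZR_le in Hz. rewrite !mult_IZR in Hz.
  assert (Ha := sqrt_sqrt (IZR (2*k-2)) ltac:(apply IZR_le; lia)).
  assert (Hq := sqrt_sqrt (IZR (n+m)) ltac:(apply IZR_le; lia)).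
  assert (Hq0 : 0 < sqrt (IZR (n+m))) by (apply sqrt_lt_R0; apply IZR_lt; lia).
  assert (Ha0 := sqrt_pos (IZR (2*k-2))).
  assert (Hk : 1 <= IZR k) by (apply IZR_le; lia).
  assert (Hm : 1 <= IZR m) by (apply IZR_le; lia).
  set (a := sqrt (IZR (2*k-2))) in *. set (q := sqrt (IZR (n+m))) in *.
  assert (Hc : a * IZR m <= IZR k * q).
  { apply sq_le; [nra|nra|].
    replace (a*IZR m*(a*IZR m)) with ((a*a)*(IZR m*IZR m)) by ring.
    replace (IZR k*q*(IZR k*q)) with (IZR k*IZR k*(q*q)) by ring.
    rewrite Ha, Hq. try exact Hz. }
  apply (Rmult_le_reg_r (IZR k * q)); [nra|].
  replace (a / IZR k * (IZR m / q) * (IZR k * q)) with (a * IZR m) by (field; lra).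
  lra.
Qed.

Lemma step (c N M : R) : 0 <= c -> 1 <= M -> M <= N -> 3 <= N + M ->
  N / (N+M) * (c * (M / sqrt (N - 2 + M))) + M / (N+M) * (c * ((M - 1) / sqrt (N - 1 + (M - 1))))
  >= c * (M / sqrt (N + M)).
Proof.
  intros Hc H1 H2 H3.
  replace (N - 1 + (M - 1)) with (N - 2 + M) by ring.
  assert (Hr := sqrt_sqrt (N-2+M) ltac:(lra)).
  assert (Hq := sqrt_sqrt (N+M) ltac:(lra)).
  assert (Hq0 : 0 < sqrt (N+M)) by (apply sqrt_lt_R0; lra).
  assert (Hr0 : 0 < sqrt (N-2+M)) by (apply sqrt_lt_R0; lra).
  set (s := N + M) in *.
  set (r := sqrt (N-2+M)) in *. set (q := sqrt s) in *.
  assert (Key : s * r <= (s - 1) * q).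
  { apply sq_le; [nra|nra|].
    replace (s*r*(s*r)) with (s*s*(r*r)) by ring.
    replace ((s-1)*q*((s-1)*q)) with ((s-1)*(s-1)*(q*q)) by ring.
    rewrite Hr, Hq. unfold s. nra. }
  replace (N / s * (c * (M / r)) + M / s * (c * ((M - 1) / r)))
    with (c * M * ((s - 1) / (s * r))) by (unfold s; field; lra).
  replace (c * (M / q)) with (c * M * (1 / q)) by (field; lra).
  apply Rle_ge. apply Rmult_le_compat_l; [nra|].
  apply (Rmult_le_reg_r (q * (s * r))); [nra|].
  replace (1 / q * (q * (s * r))) with (s*r) by (field; lra).
  replace ((s - 1) / (s * r) * (q * (s * r))) with ((s-1)*q) by (field; lra).
  exact Key.
Qed.

Lemma half (k : Z) : (1 <= k)%Z ->
  sqrt (IZR (2 * k - 2)) / IZR k * (1 / sqrt 2) <= 1/2.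
Proof.
  intros Hk1.
  assert (Ha := sqrt_sqrt (IZR (2*k-2)) ltac:(apply IZR_le; lia)).
  assert (Hq := sqrt_sqrt 2 ltac:(lra)).
  assert (Hq0 : 0 < sqrt 2) by (apply sqrt_lt_R0; lra).
  assert (Ha0 := sqrt_pos (IZR (2*k-2))).
  assert (Hk : 1 <= IZR k) by (apply IZR_le; lia).
  rewrite minus_IZR, mult_IZR in *.
  set (a := sqrt (2 * IZR k - 2)) in *. set (q := sqrt 2) in *.
  assert (Hc : 2 * a <= IZR k * q).
  { apply sq_le; [nra|nra|].
    replace (2*a*(2*a)) with (4*(a*a)) by ring.
    replace (IZR k*q*(IZR k*q)) with (IZR k*IZR k*(q*q)) by ring.
    rewrite Ha, Hq. assert (0 <= (IZR k - 2)*(IZR k - 2)) by apply Rle_0_sqr. lra. }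
  apply (Rmult_le_reg_r (2 * IZR k * q)); [nra|].
  replace (a / IZR k * (1 / q) * (2 * IZR k * q)) with (2 * a) by (field; lra).
  nra.
Qed.

Theorem theorem2 (k : Z) (hk : (1 <= k)%Z) :
  forall n m : Z, (m <= n)%Z -> (1 <= m)%Z -> (m <= k)%Z ->
    W n m >= sqrt (IZR (2 * k - 2)) / IZR k * (IZR m / sqrt (IZR (n + m))).
Proof.
  assert (Hc : 0 <= sqrt (IZR (2 * k - 2)) / IZR k).
  { apply Rmult_le_pos; [apply sqrt_pos|]. apply Rlt_le, Rinv_0_lt_compat, IZR_lt; lia. }
  assert (G : forall N : nat, forall n m, (n + m <= Z.of_nat N)%Z -> (m - 2 <= n)%Z ->
    (1 <= m)%Z -> (m <= k)%Z ->
    W n m >= sqrt (IZR (2 * k - 2)) / IZR k * (IZR m / sqrt (IZR (n + m)))).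
  { induction N as [|N IH]; intros n m HN H2 H1 Hk.
    - rewrite W_lt by lia. apply Rle_ge, base; lia.
    - destruct (Z_lt_le_dec n m) as [Hlt|Hge].
      { rewrite W_lt by lia. apply Rle_ge, base; lia. }
      rewrite W_rec by lia.
      destruct (Z.eq_dec (n+m) 2) as [E2|E2].
      { assert (n = 1%Z /\ m = 1%Z) as [-> ->] by lia.
        rewrite W_lt by lia. rewrite W_neg by lia. rewrite E2.
        replace (IZR 1 / IZR 2 * 1 + IZR 1 / IZR 2 * 0) with (1/2) by field.
        apply Rle_ge, half; lia. }
      assert (A1 := IH (n-2)%Z m ltac:(lia) ltac:(lia) H1 Hk).
      assert (A2 : W (n-1) (m-1) >= sqrt (IZR (2 * k - 2)) / IZR k *
                   ((IZR m - 1) / sqrt (IZR n - 1 + (IZR m - 1)))).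
      { destruct (Z.eq_dec m 1) as [->|Hm1].
        - rewrite W_neg by lia. replace (IZR 1 - 1) with 0 by (simpl; lra).
          unfold Rdiv. rewrite Rmult_0_l, Rmult_0_r. lra.
        - assert (B := IH (n-1)%Z (m-1)%Z ltac:(lia) ltac:(lia) ltac:(lia) ltac:(lia)).
          rewrite (plus_IZR (n-1)), (minus_IZR n), (minus_IZR m) in B. exact B. }
      rewrite (plus_IZR (n-2)), (minus_IZR n) in A1.
      assert (S := step (sqrt (IZR (2 * k - 2)) / IZR k) (IZR n) (IZR m) Hc
        ltac:(apply IZR_le; lia) ltac:(apply IZR_le; lia)
        ltac:(rewrite <- plus_IZR; apply IZR_le; lia)).
      rewrite plus_IZR.
      assert (P1 : 0 <= IZR n / (IZR n + IZR m)).
      { apply Rmult_le_pos; [apply IZR_le; lia|]. apply Rlt_le, Rinv_0_lt_compat.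
        rewrite <- plus_IZR; apply IZR_lt; lia. }
      assert (P2 : 0 <= IZR m / (IZR n + IZR m)).
      { apply Rmult_le_pos; [apply IZR_le; lia|]. apply Rlt_le, Rinv_0_lt_compat.
        rewrite <- plus_IZR; apply IZR_lt; lia. }
      apply Rle_ge. apply Rge_le in S. apply Rge_le in A1. apply Rge_le in A2.
      eapply Rle_trans; [exact S|].
      apply Rplus_le_compat; apply Rmult_le_compat_l; assumption. }
  intros n m H1 H2 H3. apply (G (Z.to_nat (n+m))); lia.
Qed.
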